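(* Let $\Omega\subset\mathbb{R}^2$ be a bounded domain and $X\subset\overline{\Omega}$ a finite set with $X\setminus\partial\Omega\subset\mathrm{int}(\mathrm{conv}(X\cap\partial\Omega))$. Then $(\mathcal{P}_X)$ and $(\mathcal{P}_X^* )$ are mutually dual conic quadratic problems, both admit solutions, and $$\mathcal{Z}_X:=\min\mathcal{P}_X=\max\mathcal{P}_X^*<\infty.$$ Moreover, for $(\mathbf{s},\mathbf{q})\in\mathbb{R}^m_+\times\mathbb{R}^m$ and $(\mathbf{u}_1,\mathbf{u}_2,\mathbf{w})\in(\mathbb{R}^n)^3$: $(\mathbf{s},\mathbf{q})$ (completed by some $\mathbf{r}$) solves $(\mathcal{P}_X)$ and $(\mathbf{u}_1,\mathbf{u}_2,\mathbf{w})$ (completed by some $\mathbf{t}_1,\mathbf{t}_2,\mathbf{t}_3$) solves $(\mathcal{P}_X^* )$ if and only if: (i) $\frac14((\mathbf{D}\mathbf{w})_k)^2/l_k+(\mathbf{B}_1\mathbf{u}_1+\mathbf{B}_2\mathbf{u}_2)_k\le l_k$ for every $k$; (ii) $\mathbf{B}_1^\top\mathbf{s}=\mathbf{0}$, $\mathbf{B}_2^\top\mathbf{s}=\mathbf{0}$, $\mathbf{D}^\top\mathbf{q}=\mathbf{f}$; (iii) $\frac14((\mathbf{D}\mathbf{w})_k)^2/l_k+(\mathbf{B}_1\mathbf{u}_1+\mathbf{B}_2\mathbf{u}_2)_k=l_k$ for each $k$ with $s_k\ne0$; (iv) $q_k=\frac12 s_k(\mathbf{D}\mathbf{w})_k/l_k$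 for every $k$.
   Context: Discrete setting: let $\bar n=\#X$, $n=\#(X\setminus\partial\Omega)$, fix an enumeration $\chi:\{1,\dots,n\}\to X\setminus\partial\Omega$, let $m=\bar n(\bar n-1)/2$ and fix an enumeration $k\mapsto\{\chi_-(k),\chi_+(k)\}$ of all unordered pairs of distinct points of $X$. A discrete load is a signed measure $f_X$ supported on $X$; $\mathbf{f}\in\mathbb{R}^n$, $f_i=f_X(\{\chi(i)\})$. $\mathbf{l}\in\mathbb{R}^m$, $l_k=|\chi_+(k)-\chi_-(k)|$. Vectors $\mathbf{u}_1,\mathbf{u}_2,\mathbf{w}\in\mathbb{R}^n$ are identified with $u:X\to\mathbb{R}^2$, $w:X\to\mathbb{R}$ vanishing on $X\cap\partial\Omega$ via $(u_{1;i},u_{2;i})=u(\chi(i))$ (components in a fixed Cartesian basis) and $w_i=w(\chi(i))$. Matrices $\mathbf{B}_1,\mathbf{B}_2,\mathbf{D}\in\mathbb{R}^{m\times n}$ are defined by $(\mathbf{B}_1\mathbf{u}_1+\mathbf{B}_2\mathbf{u}_2)_k=(u(\chi_+(k))-u(\chi_-(k)))\cdot\frac{\chi_+(k)-\chi_-(k)}{l_k}$ and $(\mathbf{D}\mathbf{w})_k=w(\chi_+(k))-w(\chi_-(k))$. Rotated cone $\mathrm{K}=\{(t_1,t_2,t_3)\in\mathbb{R}^3:t_1,t_2\ge0,\ 2t_1t_2\ge t_3^2\}$; $(\mathbf{a},\mathbf{b},\mathbf{c})\in\mathrm{K}^m$ means $(a_k,b_k,c_k)\in\mathrm{K}$ for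 all $k$. $(\mathcal{P}_X)$: $\inf\{\mathbf{l}^\top\mathbf{s}+2\mathbf{l}^\top\mathbf{r}:\mathbf{s},\mathbf{r}\in\mathbb{R}^m_+,\mathbf{q}\in\mathbb{R}^m,\ \mathbf{B}_1^\top\mathbf{s}=\mathbf{0},\mathbf{B}_2^\top\mathbf{s}=\mathbf{0},\mathbf{D}^\top\mathbf{q}=\mathbf{f},\ (\mathbf{r},\mathbf{s},\mathbf{q})\in\mathrm{K}^m\}$. $(\mathcal{P}_X^* )$: $\sup\{\mathbf{f}^\top\mathbf{w}:\mathbf{u}_1,\mathbf{u}_2,\mathbf{w}\in\mathbb{R}^n,\ \mathbf{t}_1,\mathbf{t}_2\in\mathbb{R}^m_+,\mathbf{t}_3\in\mathbb{R}^m,\ \mathbf{t}_2+\mathbf{B}_1\mathbf{u}_1+\mathbf{B}_2\mathbf{u}_2=\mathbf{l},\ \mathbf{t}_3+\mathbf{D}\mathbf{w}=\mathbf{0},\ \mathbf{t}_1=2\mathbf{l},\ (\mathbf{t}_1,\mathbf{t}_2,\mathbf{t}_3)\in\mathrm{K}^m\}$. *)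

(* Defs.v *)
From HB Require Import structures.
From mathcomp Require Import all_boot all_order all_algebra.
From mathcomp Require Import all_classical all_reals all_analysis.
Set Implicit Arguments. Unset Strict Implicit. Unset Printing Implicit Defensive.
Import Order.TTheory GRing.Theory Num.Theory.
Import numFieldNormedType.Exports.
Local Open Scope classical_set_scope.
Local Open Scope ring_scope.

Section Defs.
Variable R : realType.
Notation pt2 := (R * R)%type.

Definition bdry (A : set pt2) : set pt2 := closure A `\` interior A.

Definition conv_hull (A : set pt2) : set pt2 :=
  [set x | exists (k : nat) (c : 'I_k -> R) (a : 'I_k -> pt2),
      (forall i, 0 <= c i) /\ \sum_(i < k) c i = 1 /\ (forall i, A (a i)) /\
      x = (\sum_(i < k) c i * (a i).1, \sum_(i < k) c i * (a i).2)].

Definition edist (x y : pt2) : R :=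
  Num.sqrt ((x.1 - y.1) ^+ 2 + (x.2 - y.2) ^+ 2).

Variables (nbar n m : nat) (p : 'I_nbar -> pt2) (chi : 'I_n -> 'I_nbar)
          (chm chp : 'I_m -> 'I_nbar).

Definition lvec : 'cV[R]_m := \col_k edist (p (chp k)) (p (chm k)).

(* incidence coefficient: u(chi_+(k)) - u(chi_-(k)) as a function of the
   interior unknown attached to chi(i) (u vanishes on boundary points) *)
Definition inc (k : 'I_m) (i : 'I_n) : R :=
  (chp k == chi i)%:R - (chm k == chi i)%:R.

Definition Bmat1 : 'M[R]_(m, n) :=
  \matrix_(k, i) (inc k i * ((p (chp k)).1 - (p (chm k)).1) / lvec k 0).
Definition Bmat2 : 'M[R]_(m, n) :=
  \matrix_(k, i) (inc k i * ((p (chp k)).2 - (p (chm k)).2) / lvec k 0).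
Definition Dmat : 'M[R]_(m, n) := \matrix_(k, i) inc k i.

Definition inK (t1 t2 t3 : R) : Prop := 0 <= t1 /\ 0 <= t2 /\ t3 ^+ 2 <= 2 * t1 * t2.

Definition nonneg {k} (v : 'cV[R]_k) : Prop := forall i, 0 <= v i 0.

Definition dotv {k} (a b : 'cV[R]_k) : R := \sum_i a i 0 * b i 0.

Variable f : 'cV[R]_n.

Definition P_feas (s r q : 'cV[R]_m) : Prop :=
  nonneg s /\ nonneg r /\
  Bmat1^T *m s = 0 /\ Bmat2^T *m s = 0 /\ Dmat^T *m q = f /\
  (forall k, inK (r k 0) (s k 0) (q k 0)).
Definition P_obj (s r : 'cV[R]_m) : R := dotv lvec s + 2 * dotv lvec r.
Definition P_opt (s r q : 'cV[R]_m) : Prop :=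
  P_feas s r q /\
  forall s' r' q', P_feas s' r' q' -> P_obj s r <= P_obj s' r'.

Definition D_feas (u1 u2 w : 'cV[R]_n) (t1 t2 t3 : 'cV[R]_m) : Prop :=
  nonneg t1 /\ nonneg t2 /\
  t2 + Bmat1 *m u1 + Bmat2 *m u2 = lvec /\ t3 + Dmat *m w = 0 /\
  t1 = 2%:R *: lvec /\
  (forall k, inK (t1 k 0) (t2 k 0) (t3 k 0)).
Definition D_obj (w : 'cV[R]_n) : R := dotv f w.
Definition D_opt (u1 u2 w : 'cV[R]_n) (t1 t2 t3 : 'cV[R]_m) : Prop :=
  D_feas u1 u2 w t1 t2 t3 /\
  forall u1' u2' w' t1' t2' t3', D_feas u1' u2' w' t1' t2' t3' ->
    D_obj w' <= D_obj w.

End Defs.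

(* Main.v *)
Require Import Defs.
From HB Require Import structures.
From mathcomp Require Import all_boot all_order all_algebra.
From mathcomp Require Import all_classical all_reals all_analysis.
From mathcomp Require Import ring lra.
Import Order.TTheory GRing.Theory Num.Theory.
Import numFieldNormedType.Exports.
Local Open Scope classical_set_scope.
Local Open Scope ring_scope.

Definition linf {R : pzRingType} {Y : lmodType R} (g : Y -> R) :=
  forall a y1 y2, g (a *: y1 + y2) = a * g y1 + g y2.

Lemma linf0 {R : pzRingType} {Y : lmodType R} {g : Y -> R} : linf g -> g 0 = 0.
Proof.
move=> L; have := L 1 0 0; rewrite scale1r addr0 mul1r => H.
by apply: (@addrI _ (g 0)); rewrite addr0 -H.
Qed.

Lemma linfZ {R : pzRingType} {Y : lmodType R} {g : Y -> R} a y :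
  linf g -> g (a *: y) = a * g y.
Proof. by move=> L; have := L a y 0; rewrite addr0 (linf0 L) addr0. Qed.

Lemma linfD {R : pzRingType} {Y : lmodType R} {g : Y -> R} y z :
  linf g -> g (y + z) = g y + g z.
Proof. by move=> L; have := L 1 y z; rewrite scale1r mul1r. Qed.

Lemma linfB {R : pzRingType} {Y : lmodType R} {g : Y -> R} y z :
  linf g -> g (y - z) = g y - g z.
Proof.
move=> L; rewrite (linfD _ _ L) -scaleN1r (linfZ _ _ L) mulN1r.
by [].
Qed.

Lemma ord_cases {p} (i : 'I_p.+1) :
  i = ord_max \/ exists j : 'I_p, i = widen_ord (leqnSn p) j.
Proof.
case: i => i Hi; case: (ltnP i p) => H.
  by right; exists (Ordinal H); apply: val_inj.
by left; apply: val_inj => /=; apply/eqP; rewrite eqn_leq H -ltnS Hi.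
Qed.

Definition lext {p} {R : Type} (lam : 'I_p -> R) (c : R) (i : 'I_p.+1) : R :=
  oapp lam c (insub (val i)).

Lemma lext_w {p} {R : Type} (lam : 'I_p -> R) c j :
  lext lam c (widen_ord (leqnSn p) j) = lam j.
Proof. by rewrite /lext /= valK. Qed.

Lemma lext_max {p} {R : Type} (lam : 'I_p -> R) c :
  lext lam c ord_max = c.
Proof. by rewrite /lext /= insubN // ltnn. Qed.

Lemma farkas (R : realFieldType) (Y : lmodType R) (p : nat) :
  forall (phi : 'I_p -> Y -> R) (psi : Y -> R),
  (forall i, linf (phi i)) -> linf psi ->
  (exists lam : 'I_p -> R, (forall i, 0 <= lam i) /\
      forall y, psi y = \sum_i lam i * phi i y) \/
  (exists y, (forall i, phi i y <= 0) /\ 0 < psi y).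
Proof.
elim: p => [|p IH] phi psi Lphi Lpsi.
  have [H|H] := pselect (forall y, psi y = 0).
    by left; exists (fun _ => 0); split => // y; rewrite big_ord0 H.
  right; have [y Hy] : exists y, psi y != 0.
    case: (pselect (exists y, psi y != 0)) => [//|H2]; exfalso.
    apply: H => y; case: (eqVneq (psi y) 0) => // Hy.
    by exfalso; apply: H2; exists y.
  have [Hn|Hp] := ltrP (psi y) 0.
    exists (- y); split; first by case.
    by rewrite -scaleN1r (linfZ _ _ Lpsi) mulN1r oppr_gt0.
  exists y; split; first by case.
  by rewrite lt_def Hy Hp.
set w := widen_ord (leqnSn p).
have [[lam [lam0 Hlam]]|[y [Hy Hpsi]]] :=
  IH (fun i => phi (w i)) psi (fun i => Lphi _) Lpsi.
  left; exists (lext lam 0); split.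
    by move=> i; have [Hi|[j Hj]] := ord_cases i; rewrite ?Hi ?Hj;
       rewrite ?lext_max ?lext_w.
  by move=> y; rewrite big_ord_recr /= lext_max mul0r addr0 Hlam;
     apply: eq_bigr => i _; rewrite lext_w.
have [Hm|Hm] := lerP (phi ord_max y) 0.
  right; exists y; split => // i.
  by have [Hi|[j Hj]] := ord_cases i; rewrite ?Hi ?Hj //; apply: Hy.
set c := phi ord_max y.
have c0 : c != 0 by rewrite gt_eqF.
pose phi' i z := c * phi (w i) z - phi (w i) y * phi ord_max z.
pose psi' z := c * psi z - psi y * phi ord_max z.
have Lphi' : forall i, linf (phi' i).
  move=> i a y1 y2; rewrite /phi' !(Lphi (w i)) !(Lphi ord_max); ring.
have Lpsi' : linf psi'.
  move=> a y1 y2; rewrite /psi' !Lpsi !(Lphi ord_max); ring.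
have [[lam [lam0 Hlam]]|[y' [Hy' Hpsi']]] := IH phi' psi' Lphi' Lpsi'.
  left; exists (lext lam ((psi y - \sum_i lam i * phi (w i) y) / c)); split.
    move=> i0; have [Hi|[j Hj]] := ord_cases i0; rewrite ?Hi ?Hj; rewrite ?lext_max ?lext_w //; clear Hi.
    apply: divr_ge0; last by apply: ltW.
    rewrite subr_ge0; apply: le_trans (ltW Hpsi).
    rewrite -oppr_ge0 -sumrN; apply: sumr_ge0 => i _.
    by rewrite -mulrN mulr_ge0 // oppr_ge0.
  move=> z; rewrite big_ord_recr /= lext_max.
  under eq_bigr => i _ do rewrite lext_w.
  have E : c * psi z = psi' z + psi y * phi ord_max z by rewrite /psi'; ring.
  have E2 : psi' z = c * (\sum_i lam i * phi (w i) z)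
                     - (\sum_i lam i * phi (w i) y) * phi ord_max z.
    rewrite Hlam /phi' mulr_sumr mulr_suml -sumrB; apply: eq_bigr => i _; ring.
  apply: (mulfI c0); rewrite E E2; field; exact: c0.
right; exists (y' - (phi ord_max y' / c) *: y); split.
  move=> i; have [Hi|[j Hj]] := ord_cases i; rewrite ?Hi ?Hj.
    by rewrite (linfB _ _ (Lphi _)) (linfZ _ _ (Lphi _)) -/c divfK // subrr.
  rewrite (linfB _ _ (Lphi _)) (linfZ _ _ (Lphi _)).
  have := Hy' j; rewrite /phi' => H.
  have -> : phi (w j) y' - phi ord_max y' / c * phi (w j) y
           = (c * phi (w j) y' - phi (w j) y * phi ord_max y') / c.
    by field.
  by rewrite pmulr_lle0 // invr_gt0.
rewrite (linfB _ _ Lpsi) (linfZ _ _ Lpsi).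
have -> : psi y' - phi ord_max y' / c * psi y = psi' y' / c by rewrite /psi'; field.
by rewrite divr_gt0.
Qed.

Lemma sum_mulmx {R : comPzRingType} {m n} (A : 'M[R]_(m, n)) (x : 'cV[R]_m) (y : 'cV[R]_n) :
  \sum_k x k 0 * (A *m y) k 0 = \sum_i (A^T *m x) i 0 * y i 0.
Proof.
under eq_bigr => k _ do rewrite mxE mulr_sumr.
rewrite exchange_big /=; apply: eq_bigr => i _.
rewrite mxE mulr_suml; apply: eq_bigr => k _; rewrite mxE; ring.
Qed.

Lemma wd_k {R : realFieldType} (l r s q d a : R) :
  0 < l -> 0 <= r -> 0 <= s -> q ^+ 2 <= 2 * r * s ->
  d ^+ 2 / (4 * l) + a <= l -> q * d <= l * s + 2 * l * r - s * a.
Proof.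
move=> l0 r0 s0 hq hd.
have he : 4 * l * (d ^+ 2 / (4 * l)) = d ^+ 2 by field; lra.
have e0 : 0 <= d ^+ 2 / (4 * l) by apply: divr_ge0; [exact: sqr_ge0| lra].
move: he e0 hd; generalize (d ^+ 2 / (4 * l)) => e he e0 hd.
suff : q * d <= 2 * l * r + s * e.
  move=> H; have : s * e <= s * (l - a) by apply: ler_wpM2l => //; lra.
  lra.
have [s00|sp] := eqVneq s 0.
  move: hq; rewrite s00 mulr0 => hq.
  have q0 : q = 0 by apply/eqP; rewrite -sqrf_eq0 eq_le hq sqr_ge0.
  by rewrite q0 mul0r mul0r addr0; apply: mulr_ge0 => //; lra.
have spos : 0 < s by rewrite lt_def sp s0.
have key : 0 <= 4 * l * s * (2 * l * r + s * e - q * d).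
  have -> : 4 * l * s * (2 * l * r + s * e - q * d)
           = 4 * l * l * (2 * r * s - q ^+ 2) + (2 * l * q - s * d) ^+ 2.
    have ee : e = d ^+ 2 / (4 * l) by rewrite -he; field; lra.
    by rewrite ee; field; lra.
  apply: addr_ge0; last exact: sqr_ge0.
  apply: mulr_ge0; last by lra.
  by apply: mulr_ge0; lra.
have : 0 <= 2 * l * r + s * e - q * d.
  by rewrite -(pmulr_rge0 _ (_ : 0 < 4 * l * s)) //; apply: mulr_gt0 => //; lra.
lra.
Qed.

Lemma eq_k {R : realFieldType} (l r s q d a : R) :
  0 < l -> 0 <= r -> 0 <= s -> q ^+ 2 <= 2 * r * s ->
  d ^+ 2 / (4 * l) + a <= l -> q * d = l * s + 2 * l * r - s * a ->
  (s != 0 -> d ^+ 2 / (4 * l) + a = l) /\ q = s * d / (2 * l).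
Proof.
move=> l0 r0 s0 hq hd heq.
have he : 4 * l * (d ^+ 2 / (4 * l)) = d ^+ 2 by field; lra.
have e0 : 0 <= d ^+ 2 / (4 * l) by apply: divr_ge0; [exact: sqr_ge0| lra].
move: he e0 hd; generalize (d ^+ 2 / (4 * l)) => e he e0 hd.
have id : 0 = l * (2 * r * s - q ^+ 2) + s ^+ 2 * (l - a - e)
              + l * (q - s * d / (2 * l)) ^+ 2.
  have -> : 0 = s * (l * s + 2 * l * r - s * a - q * d) by rewrite heq subrr mulr0.
  have ee : e = d ^+ 2 / (4 * l) by rewrite -he; field; lra.
  rewrite ee; field; lra.
have t1 : 0 <= l * (2 * r * s - q ^+ 2) by apply: mulr_ge0; lra.
have t2 : 0 <= s ^+ 2 * (l - a - e) by apply: mulr_ge0; [exact: sqr_ge0| lra].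
have t3 : 0 <= l * (q - s * d / (2 * l)) ^+ 2 by apply: mulr_ge0; [lra| exact: sqr_ge0].
split.
  move=> sn0; have : s ^+ 2 * (l - a - e) = 0 by lra.
  move/eqP; rewrite mulf_eq0 sqrf_eq0 (negPf sn0) /= => /eqP; lra.
have : l * (q - s * d / (2 * l)) ^+ 2 = 0 by lra.
move/eqP; rewrite mulf_eq0 sqrf_eq0 (gt_eqF l0) /= subr_eq0 => /eqP //.
Qed.

Definition cond_i {R : realFieldType} {m n} (B1 B2 D : 'M[R]_(m, n)) (l : 'cV[R]_m)
  (u1 u2 w : 'cV[R]_n) :=
  forall k, (D *m w) k 0 ^+ 2 / (4 * l k 0) + (B1 *m u1 + B2 *m u2) k 0 <= l k 0.

Definition ADfeas {R : realType} {m n} (B1 B2 D : 'M[R]_(m, n)) (l : 'cV[R]_m)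
  (u1 u2 w : 'cV[R]_n) (t1 t2 t3 : 'cV[R]_m) : Prop :=
  nonneg t1 /\ nonneg t2 /\
  t2 + B1 *m u1 + B2 *m u2 = l /\ t3 + D *m w = 0 /\
  t1 = 2%:R *: l /\
  (forall k, inK (t1 k 0) (t2 k 0) (t3 k 0)).

Definition APfeas {R : realType} {m n} (B1 B2 D : 'M[R]_(m, n)) (f : 'cV[R]_n)
  (s r q : 'cV[R]_m) : Prop :=
  nonneg s /\ nonneg r /\
  B1^T *m s = 0 /\ B2^T *m s = 0 /\ D^T *m q = f /\
  (forall k, inK (r k 0) (s k 0) (q k 0)).

Definition APobj {R : realType} {m} (l s r : 'cV[R]_m) : R := dotv l s + 2 * dotv l r.

Lemma dfeasP {R : realType} {m n} (B1 B2 D : 'M[R]_(m, n)) (l : 'cV[R]_m) u1 u2 w :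
  (forall k, 0 < l k 0) ->
  (exists t1 t2 t3, ADfeas B1 B2 D l u1 u2 w t1 t2 t3) <-> cond_i B1 B2 D l u1 u2 w.
Proof.
move=> lpos; split.
  move=> [t1 [t2 [t3 [_ [_ [e2 [e3 [e1 hK]]]]]]]] k.
  have := hK k; rewrite /inK => -[_ [_ h]].
  have E2 : t2 k 0 = l k 0 - (B1 *m u1 + B2 *m u2) k 0.
    by rewrite -e2 !mxE; ring.
  have E3 : t3 k 0 = - (D *m w) k 0.
    by have := congr1 (fun M : 'cV[R]_m => M k 0) e3; rewrite !mxE => h0; lra.
  have E1 : t1 k 0 = 2 * l k 0 by rewrite e1 mxE.
  move: h; rewrite E1 E2 E3 sqrrN => h.
  have l0 := lpos k.
  rewrite -lerBrDr ler_pdivrMr; last by lra.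
  lra.
move=> hc; exists (2%:R *: l), (l - (B1 *m u1 + B2 *m u2)), (- (D *m w)).
split; first by move=> k; rewrite mxE; have := lpos k; lra.
split.
  move=> k; have := hc k; rewrite !mxE => h.
  have : 0 <= (D *m w) k 0 ^+ 2 / (4 * l k 0).
    by apply: divr_ge0; [exact: sqr_ge0| have := lpos k; lra].
  move: h; rewrite !mxE; lra.
split; first by rewrite -addrA subrK.
split; first by rewrite addNr.
split => // k; rewrite /inK !mxE sqrrN.
have := hc k; rewrite !mxE => h.
have l0 := lpos k.
have : 0 <= (D *m w) k 0 ^+ 2 / (4 * l k 0) by apply: divr_ge0; [exact: sqr_ge0| lra].
move: h; rewrite -lerBrDr ler_pdivrMr; last by lra.
move=> h h2; split; first by lra.
split.
  have h3 := le_trans (sqr_ge0 _) h.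
  by move: h3; rewrite pmulr_lge0 //; lra.
lra.
Qed.

Definition Ek {R : realType} {m n} (B1 B2 D : 'M[R]_(m, n)) (l : 'cV[R]_m)
  (u1 u2 w : 'cV[R]_n) (s r q : 'cV[R]_m) k :=
  l k 0 * s k 0 + 2 * l k 0 * r k 0 - s k 0 * (B1 *m u1 + B2 *m u2) k 0
  - q k 0 * (D *m w) k 0.

Lemma dot_eq {R : realType} {m n} (A : 'M[R]_(m, n)) (x : 'cV[R]_m) (y : 'cV[R]_n) :
  dotv (A^T *m x) y = \sum_k x k 0 * (A *m y) k 0.
Proof. by rewrite sum_mulmx. Qed.

Lemma gap {R : realType} {m n} (B1 B2 D : 'M[R]_(m, n)) (l : 'cV[R]_m) f
  (u1 u2 w : 'cV[R]_n) (s r q : 'cV[R]_m) :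
  B1^T *m s = 0 -> B2^T *m s = 0 -> D^T *m q = f ->
  APobj l s r - dotv f w = \sum_k Ek B1 B2 D l u1 u2 w s r q k.
Proof.
move=> h1 h2 h3.
have z1 : \sum_k s k 0 * (B1 *m u1) k 0 = 0.
  by rewrite -dot_eq h1 /dotv big1 // => i _; rewrite mxE mul0r.
have z2 : \sum_k s k 0 * (B2 *m u2) k 0 = 0.
  by rewrite -dot_eq h2 /dotv big1 // => i _; rewrite mxE mul0r.
rewrite -h3 dot_eq /APobj /dotv /Ek.
rewrite !sumrB big_split /= mulr_sumr.
under [X in _ = _ - X - _]eq_bigr => k _ do rewrite mxE mulrDr.
rewrite big_split /= z1 z2 addr0 subr0.
under [X in _ = _ + X - _]eq_bigr => k _ do rewrite -mulrA.
by [].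
Qed.

Lemma Ek_ge0 {R : realType} {m n} (B1 B2 D : 'M[R]_(m, n)) (l : 'cV[R]_m) f
  (u1 u2 w : 'cV[R]_n) (s r q : 'cV[R]_m) k :
  (forall k, 0 < l k 0) -> APfeas B1 B2 D f s r q -> cond_i B1 B2 D l u1 u2 w ->
  0 <= Ek B1 B2 D l u1 u2 w s r q k.
Proof.
move=> lpos [s0 [r0 [_ [_ [_ hK]]]]] hc.
have [_ [_ hq]] := hK k.
have := @wd_k _ (l k 0) (r k 0) (s k 0) (q k 0) ((D *m w) k 0)
  ((B1 *m u1 + B2 *m u2) k 0) (lpos k) (r0 k) (s0 k) hq (hc k).
rewrite /Ek; lra.
Qed.

Lemma weak_duality {R : realType} {m n} (B1 B2 D : 'M[R]_(m, n)) (l : 'cV[R]_m) f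
  (u1 u2 w : 'cV[R]_n) (s r q : 'cV[R]_m) :
  (forall k, 0 < l k 0) -> APfeas B1 B2 D f s r q -> cond_i B1 B2 D l u1 u2 w ->
  dotv f w <= APobj l s r.
Proof.
move=> lpos hP hc; have [_ [_ [h1 [h2 [h3 _]]]]] := hP.
rewrite -subr_ge0 (gap _ _ _ l _ u1 u2 w s r q h1 h2 h3); apply: sumr_ge0 => k _.
exact: Ek_ge0 hP hc.
Qed.

Definition rof {R : realType} {m} (s q : 'cV[R]_m) : 'cV[R]_m :=
  \col_k (q k 0 ^+ 2 / (2 * s k 0)).

Lemma kkt_suff {R : realType} {m n} (B1 B2 D : 'M[R]_(m, n)) (l : 'cV[R]_m) f
  (u1 u2 w : 'cV[R]_n) (s q : 'cV[R]_m) :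
  (forall k, 0 < l k 0) -> nonneg s ->
  cond_i B1 B2 D l u1 u2 w ->
  B1^T *m s = 0 -> B2^T *m s = 0 -> D^T *m q = f ->
  (forall k, s k 0 != 0 ->
     (D *m w) k 0 ^+ 2 / (4 * l k 0) + (B1 *m u1 + B2 *m u2) k 0 = l k 0) ->
  (forall k, q k 0 = s k 0 * (D *m w) k 0 / (2 * l k 0)) ->
  APfeas B1 B2 D f s (rof s q) q /\ APobj l s (rof s q) = dotv f w.
Proof.
move=> lpos s0 hc h1 h2 h3 h4 h5.
have hr : forall k, (s k 0 = 0 /\ q k 0 = 0 /\ rof s q k 0 = 0) \/
   (0 < s k 0 /\ 2 * rof s q k 0 * s k 0 = q k 0 ^+ 2).
  move=> k; have [e|ne] := eqVneq (s k 0) 0.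
    left; rewrite h5 e !mul0r; split => //; split => //.
    by rewrite /rof mxE e mulr0 invr0 mulr0.
  right; split; first by rewrite lt_def ne s0.
  by rewrite /rof mxE; field; rewrite ?ne ?mulf_neq0 //.
have hP : APfeas B1 B2 D f s (rof s q) q.
  split => //; split.
    move=> k; case: (hr k) => [[_ [_ ->]] //|[sp e]].
    rewrite /rof mxE; apply: divr_ge0; [exact: sqr_ge0| lra].
  split => //; split => //; split => //; move=> k; rewrite /inK.
  case: (hr k) => [[-> [-> ->]]|[sp e]]; first by rewrite expr0n /= mulr0 lexx.
  split; first by rewrite /rof mxE; apply: divr_ge0; [exact: sqr_ge0| lra].
  split; first by lra.
  by rewrite e.
split => //.
apply/eqP; rewrite -subr_eq0; apply/eqP.
rewrite (gap _ _ _ l _ u1 u2 w s (rof s q) q h1 h2 h3); apply: big1 => k _.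
rewrite /Ek.
case: (hr k) => [[e1 [e2 e3]]|[sp e]]; first by rewrite e1 e2 e3; ring.
have l0 := lpos k.
have := h4 k (lt0r_neq0 sp) => hk.
have ea : (B1 *m u1 + B2 *m u2) k 0 = l k 0 - (D *m w) k 0 ^+ 2 / (4 * l k 0) by lra.
rewrite ea h5 /rof mxE h5; field.
by apply/andP; split; rewrite ?gt_eqF //; lra.
Qed.

Lemma kkt_nec {R : realType} {m n} (B1 B2 D : 'M[R]_(m, n)) (l : 'cV[R]_m) f
  (u1 u2 w : 'cV[R]_n) (s r q : 'cV[R]_m) :
  (forall k, 0 < l k 0) -> APfeas B1 B2 D f s r q -> cond_i B1 B2 D l u1 u2 w ->
  APobj l s r = dotv f w ->
  (forall k, s k 0 != 0 ->
     (D *m w) k 0 ^+ 2 / (4 * l k 0) + (B1 *m u1 + B2 *m u2) k 0 = l k 0) /\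
  (forall k, q k 0 = s k 0 * (D *m w) k 0 / (2 * l k 0)).
Proof.
move=> lpos hP hc heq; have [s0 [r0 [h1 [h2 [h3 hK]]]]] := hP.
have hs : \sum_k Ek B1 B2 D l u1 u2 w s r q k = 0.
  by rewrite -(gap _ _ _ l _ u1 u2 w s r q h1 h2 h3) heq subrr.
have hE : forall k, Ek B1 B2 D l u1 u2 w s r q k = 0.
  move=> k; move/eqP: hs; rewrite psumr_eq0; last first.
    by move=> i _; exact: Ek_ge0 hP hc.
  by move/allP => /(_ k (mem_index_enum _)) /= /eqP.
have hk : forall k, (s k 0 != 0 ->
     (D *m w) k 0 ^+ 2 / (4 * l k 0) + (B1 *m u1 + B2 *m u2) k 0 = l k 0) /\
  q k 0 = s k 0 * (D *m w) k 0 / (2 * l k 0).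
  move=> k; have [_ [_ hq]] := hK k.
  apply: (@eq_k _ (l k 0) (r k 0) (s k 0) (q k 0) ((D *m w) k 0)
    ((B1 *m u1 + B2 *m u2) k 0) (lpos k) (r0 k) (s0 k) hq (hc k)).
  by have := hE k; rewrite /Ek; lra.
by split => k; case: (hk k).
Qed.

Lemma fin_small {R : realFieldType} (m : nat) (P : 'I_m -> R -> Prop) :
  (forall k, exists2 t, 0 < t & forall t', 0 < t' <= t -> P k t') ->
  exists2 t, 0 < t & forall k t', 0 < t' <= t -> P k t'.
Proof.
elim: m P => [|m IH] P H.
  by exists 1 => //; case.
have [t1 t10 H1] := IH (fun k => P (widen_ord (leqnSn m) k)) (fun k => H _).
have [t2 t20 H2] := H ord_max.
exists (Num.min t1 t2); first by rewrite lt_min t10 t20.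
move=> k t' /andP[t'0 t'le]; move: t'le; rewrite le_min => /andP[le1 le2].
have [->|[j ->]] := ord_cases k.
  by apply: H2; rewrite t'0 le2.
by apply: H1; rewrite t'0 le1.
Qed.

Lemma small_t {R : realFieldType} (g a b : R) :
  g <= 0 -> 0 <= b -> (g < 0 \/ a < 0) ->
  exists2 t, 0 < t & forall t', 0 < t' <= t -> g + t' * a + t' ^+ 2 * b <= 0.
Proof.
move=> g0 b0 h.
have [an|ap] := ltrP a 0.
  exists (- a / (b + 1)).
    by apply: divr_gt0; lra.
  move=> t /andP[t0 tle].
  have : t * b <= - a.
    apply: le_trans (_ : - a / (b + 1) * b <= - a).
      by apply: ler_wpM2r.
    rewrite mulrAC ler_pdivrMr; last by lra.
    rewrite mulrDr mulr1 lerDl; lra.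
  move=> tb.
  have : t * (a + t * b) <= 0 by apply: mulr_ge0_le0; lra.
  rewrite expr2; lra.
case: h => [gn|]; last by lra.
exists (Num.min 1 (- g / (a + b + 1))).
  by rewrite lt_min ltr01 /=; apply: divr_gt0; lra.
move=> t /andP[t0]; rewrite le_min => /andP[t1 t2].
have h1 : t ^+ 2 * b <= t * b.
  rewrite expr2 -mulrA ler_pM2l // -[leRHS]mul1r ler_wpM2r //.
have h2 : t * (a + b + 1) <= - g.
  by move: t2; rewrite ler_pdivlMr //; lra.
have : t * a + t * b < t * (a + b + 1) by rewrite !mulrDr ltrDl mulr1.
lra.
Qed.

Lemma lin_col {R : realType} {m n} (M : 'M[R]_(m, n)) k :
  linf (fun x : 'cV[R]_n => (M *m x) k 0).
Proof. by move=> a y1 y2; rewrite mulmxDr -scalemxAr !mxE. Qed.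

Lemma lin_dot {R : realType} {n} (f : 'cV[R]_n) :
  linf (fun x : 'cV[R]_n => dotv f x).
Proof.
move=> a y1 y2; rewrite /dotv mulr_sumr -big_split /=; apply: eq_bigr => i _.
by rewrite !mxE; ring.
Qed.

Lemma dotvBl {R : realType} {n} (a b x : 'cV[R]_n) :
  dotv (a - b) x = dotv a x - dotv b x.
Proof. by rewrite /dotv -sumrB; apply: eq_bigr => i _; rewrite !mxE mulrBl. Qed.

Lemma dotv0r {R : realType} {n} (a : 'cV[R]_n) : dotv a 0 = 0.
Proof. by rewrite /dotv big1 // => i _; rewrite mxE mulr0. Qed.

Lemma dotv_self0 {R : realType} {n} (x : 'cV[R]_n) : dotv x x = 0 -> x = 0.
Proof.
move=> /eqP; rewrite /dotv psumr_eq0; last by move=> i _; rewrite -expr2 sqr_ge0.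
move/allP => H; apply/matrixP => i j; rewrite (ord1 j) mxE.
have := H i (mem_index_enum _); rewrite /= -expr2 sqrf_eq0 => /eqP //.
Qed.

Definition Gc {R : realType} {m n} (B1 B2 D : 'M[R]_(m, n)) (l : 'cV[R]_m)
  (z : 'cV[R]_n * 'cV[R]_n * 'cV[R]_n) k :=
  (D *m z.2) k 0 ^+ 2 / (4 * l k 0) + (B1 *m z.1.1 + B2 *m z.1.2) k 0 - l k 0.

Lemma Gc_expand {R : realType} {m n} (B1 B2 D : 'M[R]_(m, n)) (l : 'cV[R]_m) z h t k :
  0 < l k 0 ->
  Gc B1 B2 D l (z + t *: h) k =
  Gc B1 B2 D l z k
  + t * ((B1 *m h.1.1 + B2 *m h.1.2) k 0 + (D *m z.2) k 0 * (D *m h.2) k 0 / (2 * l k 0))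
  + t ^+ 2 * ((D *m h.2) k 0 ^+ 2 / (4 * l k 0)).
Proof.
move=> l0; rewrite /Gc /=.
rewrite !mulmxDr -!scalemxAr !mxE.
field; lra.
Qed.

Lemma kkt_at_max {R : realType} {m n} (B1 B2 D : 'M[R]_(m, n)) (l : 'cV[R]_m) f
  (u1 u2 w : 'cV[R]_n) :
  (forall k, 0 < l k 0) ->
  cond_i B1 B2 D l u1 u2 w ->
  (forall u1' u2' w', cond_i B1 B2 D l u1' u2' w' -> dotv f w' <= dotv f w) ->
  exists s q : 'cV[R]_m, nonneg s /\
    B1^T *m s = 0 /\ B2^T *m s = 0 /\ D^T *m q = f /\
    (forall k, s k 0 != 0 ->
       (D *m w) k 0 ^+ 2 / (4 * l k 0) + (B1 *m u1 + B2 *m u2) k 0 = l k 0) /\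
    (forall k, q k 0 = s k 0 * (D *m w) k 0 / (2 * l k 0)).
Proof.
move=> lpos hc hmax.
pose Y := ('cV[R]_n * 'cV[R]_n * 'cV[R]_n)%type.
pose zs : Y := (u1, u2, w).
have condG : forall z : Y, cond_i B1 B2 D l z.1.1 z.1.2 z.2 <-> forall k, Gc B1 B2 D l z k <= 0.
  by move=> z; split => H k; have := H k; rewrite /Gc; lra.
pose ds k := (D *m w) k 0.
pose grad k (h : Y) := (B1 *m h.1.1 + B2 *m h.1.2) k 0 + ds k * (D *m h.2) k 0 / (2 * l k 0).
pose act k := Gc B1 B2 D l zs k == 0.
pose phi k (h : Y) := if act k then grad k h else 0.
pose psi (h : Y) := dotv f h.2.
have Lgrad : forall k, linf (grad k).
  move=> k a y1 y2; rewrite /grad /= !mulmxDr -!scalemxAr !mxE.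
  field; have := lpos k; lra.
have Lphi : forall k, linf (phi k).
  move=> k a y1 y2; rewrite /phi; case: (act k); last by rewrite mulr0 addr0.
  exact: Lgrad.
have Lpsi : linf psi by move=> a y1 y2; exact: lin_dot.
have [[lam [lam0 Hlam]]|[h [Hh Hpsi]]] := @farkas R _ m phi psi Lphi Lpsi.
  pose s := \col_k (if act k then lam k else 0).
  pose q := \col_k (s k 0 * ds k / (2 * l k 0)).
  have key : forall h : Y, dotv f h.2 =
      dotv (B1^T *m s) h.1.1 + dotv (B2^T *m s) h.1.2 + dotv (D^T *m q) h.2.
    move=> h; rewrite !dot_eq -!big_split /=.
    rewrite -/(psi h) Hlam; apply: eq_bigr => k _.
    rewrite /phi /s /q !mxE; case: (act k).
      by rewrite /grad !mxE; field; have := lpos k; lra.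
    by rewrite !mul0r mulr0 !addr0.
  exists s, q; split.
    by move=> k; rewrite mxE; case: (act k).
  have e1 : B1^T *m s = 0.
    apply: dotv_self0; have := key (B1^T *m s, 0, 0); rewrite /= !dotv0r => H.
    lra.
  have e2 : B2^T *m s = 0.
    apply: dotv_self0; have := key (0, B2^T *m s, 0); rewrite /= !dotv0r => H.
    lra.
  split => //; split => //; split.
    apply/eqP; rewrite -subr_eq0; apply/eqP; apply: dotv_self0.
    have := key (0, 0, D^T *m q - f); rewrite /= !dotv0r !dotvBl => H.
    have := lin_dot f; move=> _; lra.
  split.
    move=> k; rewrite mxE; case E: (act k); last by rewrite eqxx.
    by move=> _; move/eqP: E; rewrite /Gc /= => E; lra.
  by move=> k; rewrite mxE.
exfalso.
pose h0 : Y := - zs.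
have gradz : forall k, act k -> grad k h0 <= - l k 0.
  move=> k /eqP ak; have l0 := lpos k.
  rewrite /h0 -scaleN1r (linfZ _ _ (Lgrad k)) /grad /= /ds.
  move: ak; rewrite /Gc /= => ak.
  have : 0 <= (D *m w) k 0 ^+ 2 / (4 * l k 0).
    by apply: divr_ge0; [exact: sqr_ge0| lra].
  have -> : (D *m w) k 0 * (D *m w) k 0 / (2 * l k 0)
          = 2 * ((D *m w) k 0 ^+ 2 / (4 * l k 0)) by field; lra.
  lra.
pose eps := psi h / (2 * (`|psi h0| + 1)).
have eps0 : 0 < eps by apply: divr_gt0 => //; rewrite mulr_gt0 // ltr_pwDr.
pose h1 : Y := h + eps *: h0.
have psih1 : 0 < psi h1.
  rewrite /h1 addrC (Lpsi eps h0 h).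
  have : eps * `|psi h0| < psi h.
    have ec : eps * (2 * (`|psi h0| + 1)) = psi h.
      rewrite /eps; field; have := normr_ge0 (psi h0); lra.
    have : 0 < eps * (`|psi h0| + 2).
      by apply: mulr_gt0 => //; have := normr_ge0 (psi h0); lra.
    lra.
  have : - `|psi h0| <= psi h0 by rewrite lerNnormlW.
  move=> H1 H2.
  have : eps * (- `|psi h0|) <= eps * psi h0 by rewrite ler_pM2l.
  lra.
have hact : forall k, act k -> grad k h1 < 0.
  move=> k ak; rewrite /h1 addrC (Lgrad k eps h0 h).
  have := Hh k; rewrite /phi ak => H.
  have := gradz k ak; have := lpos k => l0 H2.
  have : eps * grad k h0 <= eps * (- l k 0) by rewrite ler_pM2l.
  have : 0 < eps * l k 0 by rewrite mulr_gt0.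
  lra.
have hk : forall k, exists2 t, 0 < t & forall t', 0 < t' <= t ->
    Gc B1 B2 D l zs k + t' * grad k h1
       + t' ^+ 2 * ((D *m h1.2) k 0 ^+ 2 / (4 * l k 0)) <= 0.
  move=> k; have l0 := lpos k.
  have g0 : Gc B1 B2 D l zs k <= 0 by exact: (proj1 (condG zs) hc k).
  apply: small_t => //.
    by apply: divr_ge0; [exact: sqr_ge0| lra].
  case E: (act k); first by right; apply: hact; rewrite E.
  by left; rewrite lt_def g0 andbT eq_sym; move: E; rewrite /act => ->.
have [t t0 Ht] := @fin_small R m _ hk.
have feas : cond_i B1 B2 D l (zs + t *: h1).1.1 (zs + t *: h1).1.2 (zs + t *: h1).2.
  apply/condG => k; rewrite Gc_expand ?lpos //.
  by apply: Ht; rewrite t0 lexx.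
have := hmax _ _ _ feas.
have -> : dotv f (zs + t *: h1).2 = dotv f w + t * psi h1.
  by rewrite addrC; have := Lpsi t h1 zs; rewrite /psi /= => ->; rewrite addrC.
move=> H; have : 0 < t * psi h1 by rewrite mulr_gt0.
lra.
Qed.

Lemma cont_sum {R : realType} {N n} (F : 'I_n -> R) (h : 'I_n -> 'I_N) :
  continuous (fun z : 'rV[R]_N => \sum_i F i * z ord0 (h i)).
Proof.
have : forall r : seq 'I_n,
    continuous (fun z : 'rV[R]_N => \sum_(i <- r) F i * z ord0 (h i)).
  elim => [|a r IH].
    rewrite (_ : (fun z => _) = fun=> 0); first exact: cst_continuous.
    by apply: funext => z; rewrite big_nil.
  rewrite (_ : (fun z => _) = (fun z : 'rV[R]_N => F a * z ord0 (h a))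
         + (fun z : 'rV[R]_N => \sum_(i <- r) F i * z ord0 (h i))).
    move=> x; apply: continuousD; last exact: IH.
    apply: (@continuousM _ _ (fun=> F a) (fun z : 'rV[R]_N => z ord0 (h a))).
      exact: cst_continuous.
    exact: coord_continuous.
  by apply: funext => z; rewrite big_cons.
by move=> H; apply: H.
Qed.

Lemma contD' {R : realType} {T : topologicalType} (f g : T -> R) :
  continuous f -> continuous g -> continuous (fun z => f z + g z).
Proof. by move=> cf cg x; exact: (continuousD (cf x) (cg x)). Qed.
Lemma contM' {R : realType} {T : topologicalType} (f g : T -> R) :
  continuous f -> continuous g -> continuous (fun z => f z * g z).
Proof. by move=> cf cg x; exact: (continuousM (cf x) (cg x)). Qed.

Definition Z1 {R : realType} {n} (z : 'rV[R]_(n + n + n)) : 'cV[R]_n := (lsubmx (lsubmx z))^T.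
Definition Z2 {R : realType} {n} (z : 'rV[R]_(n + n + n)) : 'cV[R]_n := (rsubmx (lsubmx z))^T.
Definition Z3 {R : realType} {n} (z : 'rV[R]_(n + n + n)) : 'cV[R]_n := (rsubmx z)^T.
Definition pk {R : realType} {n} (u1 u2 w : 'cV[R]_n) : 'rV[R]_(n + n + n) :=
  row_mx (row_mx u1^T u2^T) w^T.

Lemma Z1pk {R : realType} {n} (u1 u2 w : 'cV[R]_n) : Z1 (pk u1 u2 w) = u1.
Proof. by rewrite /Z1 /pk !row_mxKl trmxK. Qed.
Lemma Z2pk {R : realType} {n} (u1 u2 w : 'cV[R]_n) : Z2 (pk u1 u2 w) = u2.
Proof. by rewrite /Z2 /pk row_mxKl row_mxKr trmxK. Qed.
Lemma Z3pk {R : realType} {n} (u1 u2 w : 'cV[R]_n) : Z3 (pk u1 u2 w) = w.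
Proof. by rewrite /Z3 /pk row_mxKr trmxK. Qed.
Lemma pkZ {R : realType} {n} (z : 'rV[R]_(n + n + n)) : pk (Z1 z) (Z2 z) (Z3 z) = z.
Proof. by rewrite /pk /Z1 /Z2 /Z3 !trmxK !hsubmxK. Qed.

Lemma cont_Z1 {R : realType} {m n} (M : 'M[R]_(m, n)) k :
  continuous (fun z : 'rV[R]_(n + n + n) => (M *m Z1 z) k 0).
Proof.
rewrite (_ : (fun z => _) = fun z : 'rV[R]_(n + n + n) => \sum_i M k i * z ord0 (lshift n (lshift n i))).
  exact: cont_sum.
by apply: funext => z; rewrite mxE; apply: eq_bigr => i _; rewrite !mxE.
Qed.
Lemma cont_Z2 {R : realType} {m n} (M : 'M[R]_(m, n)) k :
  continuous (fun z : 'rV[R]_(n + n + n) => (M *m Z2 z) k 0).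
Proof.
rewrite (_ : (fun z => _) = fun z : 'rV[R]_(n + n + n) => \sum_i M k i * z ord0 (lshift n (rshift n i))).
  exact: cont_sum.
by apply: funext => z; rewrite mxE; apply: eq_bigr => i _; rewrite !mxE.
Qed.
Lemma cont_Z3 {R : realType} {m n} (M : 'M[R]_(m, n)) k :
  continuous (fun z : 'rV[R]_(n + n + n) => (M *m Z3 z) k 0).
Proof.
rewrite (_ : (fun z => _) = fun z : 'rV[R]_(n + n + n) => \sum_i M k i * z ord0 (rshift (n + n) i)).
  exact: cont_sum.
by apply: funext => z; rewrite mxE; apply: eq_bigr => i _; rewrite !mxE.
Qed.

Lemma exists_max {R : realType} {m n} (B1 B2 D : 'M[R]_(m, n)) (l : 'cV[R]_m) f :
  (forall k, 0 < l k 0) ->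
  (exists M, forall u1 u2 w, cond_i B1 B2 D l u1 u2 w -> forall i,
      `|u1 i 0| <= M /\ `|u2 i 0| <= M /\ `|w i 0| <= M) ->
  exists u1 u2 w, cond_i B1 B2 D l u1 u2 w /\
    forall u1' u2' w', cond_i B1 B2 D l u1' u2' w' -> dotv f w' <= dotv f w.
Proof.
move=> lpos [M HM].
pose gz k (z : 'rV[R]_(n + n + n)) :=
  (D *m Z3 z) k 0 ^+ 2 / (4 * l k 0) + ((B1 *m Z1 z) k 0 + (B2 *m Z2 z) k 0).
have gzE : forall z k, gz k z = (D *m Z3 z) k 0 ^+ 2 / (4 * l k 0)
    + (B1 *m Z1 z + B2 *m Z2 z) k 0.
  by move=> z k; rewrite /gz; congr (_ + _); rewrite [RHS]mxE.
pose S := [set z : 'rV[R]_(n + n + n) | cond_i B1 B2 D l (Z1 z) (Z2 z) (Z3 z)].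
have cgz : forall k, continuous (gz k).
  move=> k; rewrite /gz; apply: contD'; last by apply: contD'; [exact: cont_Z1|exact: cont_Z2].
  apply: contM'; last exact: cst_continuous.
  under eq_fun do rewrite expr2.
  by apply: contM'; exact: cont_Z3.
have Sclosed : closed S.
  rewrite (_ : S = \bigcap_(k in setT) (gz k @^-1` [set x | x <= l k 0])).
    apply: closed_bigI => k _; apply: preimage_closed; last exact: closed_le.
    by move=> x _; apply: cgz.
  apply/seteqP; split.
    by move=> z Sz k _ /=; rewrite gzE; apply: Sz.
  by move=> z Sz k; rewrite -gzE; apply: Sz.
pose Box := [set v : 'rV[R]_(n + n + n) | forall j, `[- M, M]%classic (v ord0 j)].
have Bc : compact Box.
  by apply: (@rV_compact _ _ (fun=> `[- M, M]%classic)) => _; apply: segment_compact.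
have SB : S `<=` Box.
  move=> z Sz j; have HMz := HM _ _ _ Sz; rewrite -[z]pkZ.
  rewrite /= in_itv /= -ler_norml.
  rewrite /pk !mxE; case: (fintype.split j) => j1.
    by rewrite mxE; case: (fintype.split j1) => j2; have [H1 [H2 _]] := HMz j2; rewrite mxE.
  by have [_ [_ H3]] := HMz j1; rewrite mxE.
have Sc : compact S by apply: subclosed_compact Sclosed Bc SB.
have S0 : S !=set0.
  exists (pk 0 0 0) => k; rewrite Z1pk Z2pk Z3pk !mulmx0 addr0 mxE expr0n /= mul0r add0r.
  by apply: ltW; apply: lpos.
have cobj : continuous (fun z : 'rV[R]_(n + n + n) => dotv f (Z3 z)).
  rewrite (_ : (fun z => _) = fun z : 'rV[R]_(n + n + n) => \sum_i f i 0 * z ord0 (rshift (n + n) i)).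
    exact: cont_sum.
  by apply: funext => z; rewrite /dotv; apply: eq_bigr => i _; rewrite !mxE.
have [c cS cmax] := EVT_max_rV S0 Sc (continuous_subspaceT cobj).
rewrite inE in cS.
exists (Z1 c), (Z2 c), (Z3 c); split => // u1 u2 w hc.
have := cmax (pk u1 u2 w); rewrite Z3pk; apply; rewrite inE /S /=.
by rewrite Z1pk Z2pk Z3pk.
Qed.

Definition APopt {R : realType} {m n} (B1 B2 D : 'M[R]_(m, n)) (l : 'cV[R]_m) f
  (s r q : 'cV[R]_m) : Prop :=
  APfeas B1 B2 D f s r q /\
  forall s' r' q', APfeas B1 B2 D f s' r' q' -> APobj l s r <= APobj l s' r'.

Definition ADopt {R : realType} {m n} (B1 B2 D : 'M[R]_(m, n)) (l : 'cV[R]_m) (f : 'cV[R]_n)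
  u1 u2 w (t1 t2 t3 : 'cV[R]_m) : Prop :=
  ADfeas B1 B2 D l u1 u2 w t1 t2 t3 /\
  forall u1' u2' w' t1' t2' t3', ADfeas B1 B2 D l u1' u2' w' t1' t2' t3' ->
    dotv f w' <= dotv f w.

Lemma abs_main {R : realType} {m n} (B1 B2 D : 'M[R]_(m, n)) (l : 'cV[R]_m) (f : 'cV[R]_n) :
  (forall k, 0 < l k 0) ->
  (exists M, forall u1 u2 w, cond_i B1 B2 D l u1 u2 w -> forall i,
      `|u1 i 0| <= M /\ `|u2 i 0| <= M /\ `|w i 0| <= M) ->
  (exists Z : R,
     (exists s r q, APopt B1 B2 D l f s r q /\ APobj l s r = Z) /\
     (exists u1 u2 w t1 t2 t3, ADopt B1 B2 D l f u1 u2 w t1 t2 t3 /\ dotv f w = Z)) /\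
  (forall (s q : 'cV[R]_m) (u1 u2 w : 'cV[R]_n), nonneg s ->
     ((exists r, APopt B1 B2 D l f s r q) /\
      (exists t1 t2 t3, ADopt B1 B2 D l f u1 u2 w t1 t2 t3))
     <->
     [/\ forall k, ((D *m w) k 0) ^+ 2 / (4 * l k 0)
                   + (B1 *m u1 + B2 *m u2) k 0 <= l k 0,
         B1^T *m s = 0 /\ B2^T *m s = 0 /\ D^T *m q = f,
         forall k, s k 0 != 0 ->
           ((D *m w) k 0) ^+ 2 / (4 * l k 0) + (B1 *m u1 + B2 *m u2) k 0 = l k 0
       & forall k, q k 0 = s k 0 * (D *m w) k 0 / (2 * l k 0)]).
Proof.
move=> lpos bnd.
have [u1 [u2 [w [hc hmax]]]] := exists_max _ _ _ _ f lpos bnd.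
have [s [q [s0 [h1 [h2 [h3 [h4 h5]]]]]]] := kkt_at_max _ _ _ _ _ _ _ _ lpos hc hmax.
have [hP hobj] := kkt_suff _ _ _ _ _ _ _ _ _ _ lpos s0 hc h1 h2 h3 h4 h5.
have dual_ok : forall u1' u2' w' t1' t2' t3', ADfeas B1 B2 D l u1' u2' w' t1' t2' t3' ->
    dotv f w' <= dotv f w.
  move=> u1' u2' w' t1' t2' t3' hD.
  have hc' : cond_i B1 B2 D l u1' u2' w'.
    by apply/(dfeasP _ _ _ _ _ _ _ lpos); exists t1', t2', t3'.
  by rewrite -hobj; apply: weak_duality _ _ _ _ _ _ _ _ _ _ _ lpos hP hc'.
have primal_ok : forall s' r' q', APfeas B1 B2 D f s' r' q' ->
    APobj l s (rof s q) <= APobj l s' r'.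
  by move=> s' r' q' hP'; rewrite hobj; apply: weak_duality _ _ _ _ _ _ _ _ _ _ _ lpos hP' hc.
have [t1 [t2 [t3 hD]]] := proj2 (dfeasP _ _ _ _ _ _ _ lpos) hc.
split.
  exists (dotv f w); split.
    by exists s, (rof s q), q.
  by exists u1, u2, w, t1, t2, t3.
move=> s' q' u1' u2' w' s'0; split.
  move=> [[r' [hP' hopt']] [t1' [t2' [t3' [hD' hoptD']]]]].
  have hc' : cond_i B1 B2 D l u1' u2' w'.
    by apply/(dfeasP _ _ _ _ _ _ _ lpos); exists t1', t2', t3'.
  have e : APobj l s' r' = dotv f w'.
    apply/eqP; rewrite eq_le; apply/andP; split; last exact: weak_duality _ _ _ _ _ _ _ _ _ _ _ lpos hP' hc'.
    apply: le_trans (hopt' _ _ _ hP) _; rewrite hobj.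
    exact: hoptD' hD.
  have [k1 k2] := kkt_nec _ _ _ _ _ _ _ _ _ _ _ lpos hP' hc' e.
  by have [_ [_ [e1 [e2 [e3 _]]]]] := hP'; split.
move=> [hc' [e1 [e2 e3]] e4 e5].
have [hP' hobj'] := kkt_suff _ _ _ _ _ _ _ _ _ _ lpos s'0 hc' e1 e2 e3 e4 e5.
split.
  exists (rof s' q'); split => // s'' r'' q'' hP''.
  by rewrite hobj'; apply: weak_duality _ _ _ _ _ _ _ _ _ _ _ lpos hP'' hc'.
have [t1' [t2' [t3' hD']]] := proj2 (dfeasP _ _ _ _ _ _ _ lpos) hc'.
exists t1', t2', t3'; split => // u1'' u2'' w'' t1'' t2'' t3'' hD''.
have hc'' : cond_i B1 B2 D l u1'' u2'' w''.
  by apply/(dfeasP _ _ _ _ _ _ _ lpos); exists t1'', t2'', t3''.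
by rewrite -hobj'; apply: weak_duality _ _ _ _ _ _ _ _ _ _ _ lpos hP' hc''.
Qed.

Lemma normK2 {R : realDomainType} (x : R) : `|x| ^+ 2 = x ^+ 2.
Proof. exact: real_normK (num_real x). Qed.

Lemma abs_le_of_sq {R : realFieldType} (x l : R) : 0 <= l -> x ^+ 2 <= l ^+ 2 -> `|x| <= l.
Proof.
move=> l0 h; rewrite -(@ler_sqr _ `|x| l) ?nnegrE ?normr_ge0 //.
by rewrite normK2.
Qed.

Lemma geo_alg {R : realFieldType} (l a dd v1 v2 X Y w sg : R) :
  0 < l -> l ^+ 2 = (sg * X) ^+ 2 + (sg * Y) ^+ 2 -> sg ^+ 2 = 1 ->
  dd = sg * w ->
  a * l = (sg * v1) * (sg * X) + (sg * v2) * (sg * Y) ->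
  dd ^+ 2 / (4 * l) + a <= l ->
  v1 * X + v2 * Y <= l ^+ 2 /\ w ^+ 2 <= 4 * l * (l + `|v1| + `|v2|).
Proof.
move=> l0 hl sg2 hdd ha hc.
have ha' : a * l = v1 * X + v2 * Y.
  rewrite ha; have -> : sg * v1 * (sg * X) + sg * v2 * (sg * Y)
     = sg ^+ 2 * (v1 * X + v2 * Y) by ring.
  by rewrite sg2 mul1r.
have hl' : l ^+ 2 = X ^+ 2 + Y ^+ 2.
  by rewrite hl !exprMn sg2 !mul1r.
have hw : dd ^+ 2 = w ^+ 2 by rewrite hdd exprMn sg2 mul1r.
have q0 : 0 <= dd ^+ 2 / (4 * l) by apply: divr_ge0; [exact: sqr_ge0| lra].
have hq : 4 * l * (dd ^+ 2 / (4 * l)) = dd ^+ 2 by field; lra.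
have al : a <= l by lra.
split.
  rewrite -ha' expr2; apply: ler_wpM2r; lra.
have hX : `|X| <= l by apply: abs_le_of_sq; [lra| rewrite hl'; have := sqr_ge0 Y; lra].
have hY : `|Y| <= l by apply: abs_le_of_sq; [lra| rewrite hl'; have := sqr_ge0 X; lra].
have h1 : - (v1 * X) <= `|v1| * l.
  apply: le_trans (_ : `|v1| * `|X| <= _).
    by rewrite -normrM -normrN ler_norm.
  by apply: ler_wpM2l => //; exact: normr_ge0.
have h2 : - (v2 * Y) <= `|v2| * l.
  apply: le_trans (_ : `|v2| * `|Y| <= _).
    by rewrite -normrM -normrN ler_norm.
  by apply: ler_wpM2l => //; exact: normr_ge0.
have ha2 : - a <= `|v1| + `|v2|.
  rewrite -(ler_pM2r l0) mulrDl; lra.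
rewrite -hw -hq; apply: ler_wpM2l; lra.
Qed.

Definition ext {R : realType} {nbar n} (chi : 'I_n -> 'I_nbar) (u : 'cV[R]_n)
  (a : 'I_nbar) : R := \sum_i (a == chi i)%:R * u i 0.

Lemma ext_chi {R : realType} {nbar n} (chi : 'I_n -> 'I_nbar) (u : 'cV[R]_n) i :
  injective chi -> ext chi u (chi i) = u i 0.
Proof.
move=> Hi; rewrite /ext (bigD1 i) //= eqxx mul1r big1 ?addr0 // => j ji.
by rewrite (inj_eq Hi) eq_sym (negPf ji) mul0r.
Qed.

Lemma ext_out {R : realType} {nbar n} (chi : 'I_n -> 'I_nbar) (u : 'cV[R]_n) a :
  (forall i, chi i != a) -> ext chi u a = 0.
Proof.
by move=> H; rewrite /ext big1 // => i _; rewrite eq_sym (negPf (H i)) mul0r.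
Qed.

Lemma D_ext {R : realType} {nbar n m} (chi : 'I_n -> 'I_nbar) (chm chp : 'I_m -> 'I_nbar)
  (w : 'cV[R]_n) k :
  (Dmat R chi chm chp *m w) k 0 = ext chi w (chp k) - ext chi w (chm k).
Proof.
by rewrite mxE /ext -sumrB; apply: eq_bigr => i _; rewrite mxE /inc mulrBl.
Qed.

Lemma B_ext {R : realType} {nbar n m} (p : 'I_nbar -> (R * R)%type) (chi : 'I_n -> 'I_nbar)
  (chm chp : 'I_m -> 'I_nbar) (u1 u2 : 'cV[R]_n) k :
  lvec p chm chp k 0 != 0 ->
  (Bmat1 p chi chm chp *m u1 + Bmat2 p chi chm chp *m u2) k 0 * lvec p chm chp k 0 =
  (ext chi u1 (chp k) - ext chi u1 (chm k)) * ((p (chp k)).1 - (p (chm k)).1) +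
  (ext chi u2 (chp k) - ext chi u2 (chm k)) * ((p (chp k)).2 - (p (chm k)).2).
Proof.
move=> l0.
have H1 : (Bmat1 p chi chm chp *m u1) k 0 = (ext chi u1 (chp k) - ext chi u1 (chm k))
    * ((p (chp k)).1 - (p (chm k)).1) / lvec p chm chp k 0.
  rewrite mxE /ext -sumrB !mulr_suml; apply: eq_bigr => i _; rewrite mxE /inc; ring.
have H2 : (Bmat2 p chi chm chp *m u2) k 0 = (ext chi u2 (chp k) - ext chi u2 (chm k))
    * ((p (chp k)).2 - (p (chm k)).2) / lvec p chm chp k 0.
  rewrite mxE /ext -sumrB !mulr_suml; apply: eq_bigr => i _; rewrite mxE /inc; ring.
rewrite mxE H1 H2; field; exact: l0.
Qed.

Lemma lvec_sq {R : realType} {nbar m} (p : 'I_nbar -> (R * R)%type)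
  (chm chp : 'I_m -> 'I_nbar) k :
  lvec p chm chp k 0 ^+ 2 =
  ((p (chp k)).1 - (p (chm k)).1) ^+ 2 + ((p (chp k)).2 - (p (chm k)).2) ^+ 2.
Proof.
by rewrite mxE /edist sqr_sqrtr // addr_ge0 // sqr_ge0.
Qed.

Lemma lvec_ge0 {R : realType} {nbar m} (p : 'I_nbar -> (R * R)%type)
  (chm chp : 'I_m -> 'I_nbar) k : 0 <= lvec p chm chp k 0.
Proof. by rewrite mxE /edist sqrtr_ge0. Qed.

Lemma lvec_pos {R : realType} {nbar m} (p : 'I_nbar -> (R * R)%type)
  (chm chp : 'I_m -> 'I_nbar) :
  injective p -> (forall k, chm k != chp k) -> forall k, 0 < lvec p chm chp k 0.
Proof.
move=> Hp Hne k; rewrite mxE /edist sqrtr_gt0.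
have hne : p (chp k) != p (chm k) by rewrite (inj_eq Hp) eq_sym.
rewrite lt_def addr_ge0 ?sqr_ge0 // andbT.
apply: contra hne => /eqP H.
have a0 := sqr_ge0 ((p (chp k)).1 - (p (chm k)).1).
have b0 := sqr_ge0 ((p (chp k)).2 - (p (chm k)).2).
have e1 : ((p (chp k)).1 - (p (chm k)).1) ^+ 2 = 0 by lra.
have e2 : ((p (chp k)).2 - (p (chm k)).2) ^+ 2 = 0 by lra.
move/eqP: e1; rewrite sqrf_eq0 subr_eq0 => /eqP e1.
move/eqP: e2; rewrite sqrf_eq0 subr_eq0 => /eqP e2.
by case: (p (chp k)) (p (chm k)) e1 e2 => ? ? [? ?] /= -> ->.
Qed.

Lemma pair_bound {R : realType} {nbar n m} (Omega : set (R * R)%type)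
  (p : 'I_nbar -> (R * R)%type) (chi : 'I_n -> 'I_nbar) (chm chp : 'I_m -> 'I_nbar) :
  injective chi ->
  (forall a, ~ bdry Omega (p a) <-> exists i, chi i = a) ->
  (forall k, 0 < lvec p chm chp k 0) ->
  (forall a b, a != b -> exists! k,
      (chm k = a /\ chp k = b) \/ (chm k = b /\ chp k = a)) ->
  forall i b, bdry Omega (p b) ->
  exists k0, forall u1 u2 w,
    cond_i (Bmat1 p chi chm chp) (Bmat2 p chi chm chp) (Dmat R chi chm chp)
      (lvec p chm chp) u1 u2 w ->
    u1 i 0 * ((p (chi i)).1 - (p b).1) + u2 i 0 * ((p (chi i)).2 - (p b).2)
      <= lvec p chm chp k0 0 ^+ 2 /\
    w i 0 ^+ 2 <= 4 * lvec p chm chp k0 0 *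
                  (lvec p chm chp k0 0 + `|u1 i 0| + `|u2 i 0|).
Proof.
move=> Hchi Hbd lpos Hpair i b hb.
have bout : forall i', chi i' != b.
  by move=> i'; apply/eqP => e; apply: (proj2 (Hbd b)) hb; exists i'.
have [k0 [hk0 _]] := Hpair _ _ (bout i).
exists k0 => u1 u2 w hc.
have l0 := lpos k0.
have hB := B_ext p chi chm chp u1 u2 k0 (lt0r_neq0 l0).
have hD := D_ext chi chm chp w k0.
have hsq := lvec_sq p chm chp k0.
have hc0 := hc k0.
case: hk0 => [[em ep]|[em ep]]; rewrite ?em ?ep in hB hD hsq;
  rewrite ?(ext_chi _ _ _ Hchi) ?(ext_out _ _ _ bout) in hB hD.
  apply: (@geo_alg _ _ ((Bmat1 p chi chm chp *m u1 + Bmat2 p chi chm chp *m u2) k0 0)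
     ((Dmat R chi chm chp *m w) k0 0) _ _ _ _ _ (-1) l0).
  - by rewrite hsq; ring.
  - by rewrite sqrrN expr1n.
  - by rewrite hD; ring.
  - by rewrite hB; ring.
  - exact: hc0.
apply: (@geo_alg _ _ ((Bmat1 p chi chm chp *m u1 + Bmat2 p chi chm chp *m u2) k0 0)
   ((Dmat R chi chm chp *m w) k0 0) _ _ _ _ _ 1 l0).
- by rewrite hsq; ring.
- by rewrite expr1n.
- by rewrite hD; ring.
- by rewrite hB; ring.
- exact: hc0.
Qed.

Lemma interior_ball {R : realType} (A : set (R * R)%type) x :
  interior A x -> exists2 e : R, 0 < e &
    forall y : R * R, `|x.1 - y.1| < e -> `|x.2 - y.2| < e -> A y.
Proof.
rewrite /interior => /nbhs_ballP [e e0 H]; exists e => // y h1 h2.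
by apply: H; split => /=; rewrite -ball_normE.
Qed.

Lemma S_bound' {R : realFieldType} (a b e d C : R) :
  0 <= a -> 0 <= b ->
  0 < e -> 0 <= C -> e = d * (2 * (1 + (a + b))) ->
  d * (a ^+ 2 + b ^+ 2) <= C ->
  a + b <= 1 + 8 * C / e.
Proof.
move=> a0 b0 e0 C0 ed hd.
set S := a + b.
have S0 : 0 <= S by rewrite /S addr_ge0.
have sq : S ^+ 2 <= 2 * (a ^+ 2 + b ^+ 2).
  have := sqr_ge0 (a - b).
  have -> : 2 * (a ^+ 2 + b ^+ 2) = S ^+ 2 + (a - b) ^+ 2 by rewrite /S; ring.
  by rewrite lerDl.
have h1 : e * (a ^+ 2 + b ^+ 2) <= 2 * (1 + S) * C.
  rewrite ed.
  have -> : d * (2 * (1 + S)) * (a ^+ 2 + b ^+ 2) = 2 * (1 + S) * (d * (a ^+ 2 + b ^+ 2)) by ring.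
  by apply: ler_wpM2l => //; rewrite mulr_ge0 // addr_ge0.
have h2 : e * S ^+ 2 <= 4 * (1 + S) * C.
  apply: le_trans (_ : e * (2 * (a ^+ 2 + b ^+ 2)) <= _).
    by apply: ler_wpM2l => //; exact: ltW.
  have -> : e * (2 * (a ^+ 2 + b ^+ 2)) = 2 * (e * (a ^+ 2 + b ^+ 2)) by ring.
  have -> : 4 * (1 + S) * C = 2 * (2 * (1 + S) * C) by ring.
  by rewrite ler_pM2l.
have q0 : 0 <= 8 * C / e by apply: divr_ge0; [rewrite mulr_ge0| exact: ltW].
have [S1|S1] := lerP S 1.
  by apply: le_trans S1 _; rewrite lerDl.
have Sp : 0 < S by apply: lt_trans S1.
have h3 : e * S ^+ 2 <= 8 * S * C.
  apply: le_trans h2 _.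
  have h : 4 * (1 + S) <= 8 * S.
    have -> : 8 * S = 4 * (S + S) by ring.
    by rewrite ler_pM2l // lerD2r ltW.
  by apply: ler_wpM2r.
have h4 : e * S <= 8 * C.
  rewrite -(ler_pM2r Sp).
  have -> : e * S * S = e * S ^+ 2 by ring.
  by have -> : 8 * C * S = 8 * S * C by ring.
have : S <= 8 * C / e by rewrite ler_pdivlMr // mulrC.
move=> h5; apply: le_trans h5 _; rewrite lerDr; exact: ler01.
Qed.

Lemma S_bound {R : realFieldType} (v1 v2 e d C : R) :
  0 < e -> 0 <= C -> e = d * (2 * (1 + (`|v1| + `|v2|))) ->
  d * (v1 ^+ 2 + v2 ^+ 2) <= C ->
  `|v1| + `|v2| <= 1 + 8 * C / e.
Proof.
move=> e0 C0 ed hd.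
have hd' : d * (`|v1| ^+ 2 + `|v2| ^+ 2) <= C by rewrite !normK2.
exact: (S_bound' _ _ _ _ _ (normr_ge0 v1) (normr_ge0 v2) e0 C0 ed hd').
Qed.

Lemma le_one_plus_sq {R : realFieldType} (l : R) : l <= 1 + l ^+ 2.
Proof.
have := sqr_ge0 (l - 1).
have -> : (l - 1) ^+ 2 = l ^+ 2 - 2 * l + 1 by ring.
have := sqr_ge0 l; lra.
Qed.

Lemma bound_all {R : realType} {nbar n m} (Omega : set (R * R)%type)
  (p : 'I_nbar -> (R * R)%type) (chi : 'I_n -> 'I_nbar) (chm chp : 'I_m -> 'I_nbar) :
  injective chi ->
  (forall a, ~ bdry Omega (p a) <-> exists i, chi i = a) ->
  (forall k, 0 < lvec p chm chp k 0) ->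
  (forall a b, a != b -> exists! k,
      (chm k = a /\ chp k = b) \/ (chm k = b /\ chp k = a)) ->
  (forall i, interior (conv_hull [set x | exists a, x = p a /\ bdry Omega x])
                      (p (chi i))) ->
  exists M, forall u1 u2 w,
    cond_i (Bmat1 p chi chm chp) (Bmat2 p chi chm chp) (Dmat R chi chm chp)
      (lvec p chm chp) u1 u2 w ->
    forall i, `|u1 i 0| <= M /\ `|u2 i 0| <= M /\ `|w i 0| <= M.
Proof.
move=> Hchi Hbd lpos Hpair Hint.
pose C := \sum_k lvec p chm chp k 0 ^+ 2.
have C0 : 0 <= C by apply: sumr_ge0 => k _; exact: sqr_ge0.
have lC : forall k, lvec p chm chp k 0 ^+ 2 <= C.
  move=> k; rewrite /C (bigD1 k) //= lerDl; apply: sumr_ge0 => j _; exact: sqr_ge0.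
have lC' : forall k, lvec p chm chp k 0 <= 1 + C.
  by move=> k; apply: le_trans (le_one_plus_sq _) _; rewrite lerD2l.
have per_i : forall i, exists Mi : R, forall u1 u2 w,
    cond_i (Bmat1 p chi chm chp) (Bmat2 p chi chm chp) (Dmat R chi chm chp)
      (lvec p chm chp) u1 u2 w ->
    `|u1 i 0| <= Mi /\ `|u2 i 0| <= Mi /\ `|w i 0| <= Mi.
  move=> i.
  have [e e0 He] := @interior_ball _ _ _ (Hint i).
  have [b0 hb0] : exists b0, bdry Omega (p b0).
    have := He (p (chi i)); rewrite !subrr normr0 => /(_ e0 e0) [K [c [a [c0 [c1 [ca _]]]]]].
    case: K c a c0 c1 ca => [|K] c a c0 c1 ca.
      by move: c1; rewrite big_ord0 => /eqP; rewrite eq_sym oner_eq0.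
    have [b [eb hb]] := ca ord0; exists b; by rewrite -eb.
  have [k1 Hk1] := pair_bound _ _ _ _ _ Hchi Hbd lpos Hpair i b0 hb0.
  pose Kb := 1 + 8 * C / e.
  have Kb1 : 1 <= Kb by rewrite /Kb lerDl divr_ge0 // ?mulr_ge0 // ltW.
  exists (Kb + 1 + 4 * (1 + C) * (1 + C + Kb)) => u1 u2 w hc.
  have hK : `|u1 i 0| + `|u2 i 0| <= Kb.
    pose S := `|u1 i 0| + `|u2 i 0|.
    pose d := e / (2 * (1 + S)).
    have S0 : 0 <= S by rewrite addr_ge0.
    have d0 : 0 < d by rewrite divr_gt0 // mulr_gt0 // ltr_pwDl.
    have ed : e = d * (2 * (1 + S)) by rewrite /d divfK // mulf_neq0 // gt_eqF // ltr_pwDl.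
    have dS : d * S < e.
      rewrite ed ltr_pM2l //.
      by have := S0; lra.
    have hy : conv_hull [set x | exists a, x = p a /\ bdry Omega x]
                ((p (chi i)).1 - d * u1 i 0, (p (chi i)).2 - d * u2 i 0).
      apply: He => /=; rewrite opprB addrC subrK normrM gtr0_norm //.
        apply: le_lt_trans dS; rewrite ler_pM2l // /S lerDl; exact: normr_ge0.
      apply: le_lt_trans dS; rewrite ler_pM2l // /S lerDr; exact: normr_ge0.
    case: hy => [K [c [a [c0 [c1 [ca ey]]]]]].
    have ey1 := congr1 fst ey; have ey2 := congr1 snd ey; rewrite /= in ey1 ey2.
    have hT : forall j, u1 i 0 * ((p (chi i)).1 - (a j).1) + u2 i 0 * ((p (chi i)).2 - (a j).2) <= C.
      move=> j; have [b [eb hb]] := ca j; rewrite eb in hb *.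
      have [k2 Hk2] := pair_bound _ _ _ _ _ Hchi Hbd lpos Hpair i b hb.
      have [h _] := Hk2 u1 u2 w hc.
      exact: le_trans h (lC k2).
    have hsum : \sum_j c j * (u1 i 0 * ((p (chi i)).1 - (a j).1) + u2 i 0 * ((p (chi i)).2 - (a j).2)) <= C.
      apply: le_trans (_ : \sum_j c j * C <= _).
        by apply: ler_sum => j _; apply: ler_wpM2l; [exact: c0| exact: hT].
      by rewrite -mulr_suml c1 mul1r.
    have hsumE : \sum_j c j * (u1 i 0 * ((p (chi i)).1 - (a j).1) + u2 i 0 * ((p (chi i)).2 - (a j).2))
        = u1 i 0 * (p (chi i)).1 * (\sum_j c j) - u1 i 0 * (\sum_j c j * (a j).1)
          + (u2 i 0 * (p (chi i)).2 * (\sum_j c j) - u2 i 0 * (\sum_j c j * (a j).2)).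
      rewrite !mulr_sumr -!sumrB -big_split /=; apply: eq_bigr => j _; ring.
    rewrite hsumE c1 -ey1 -ey2 in hsum.
    have hd : d * (u1 i 0 ^+ 2 + u2 i 0 ^+ 2) <= C.
      by apply: le_trans hsum; rewrite le_eqVlt; apply/orP; left; apply/eqP; ring.
    exact: S_bound e0 C0 ed hd.
  have [_ hw] := Hk1 u1 u2 w hc.
  have X0 : 0 <= 4 * (1 + C) * (1 + C + Kb).
    by apply: mulr_ge0; [apply: mulr_ge0; lra| lra].
  have n1 := normr_ge0 (u1 i 0); have n2 := normr_ge0 (u2 i 0).
  split; first by lra.
  split; first by lra.
  have l0 := lvec_ge0 p chm chp k1.
  have hw2 : w i 0 ^+ 2 <= 4 * (1 + C) * (1 + C + Kb).
    apply: le_trans hw _.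
    rewrite -mulrA -[X in _ <= X]mulrA ler_pM2l //.
    have := lC' k1; move=> hl.
    by apply: ler_pM; lra.
  have : `|w i 0| <= 1 + w i 0 ^+ 2 by rewrite -normK2 le_one_plus_sq.
  move=> h; apply: le_trans h _.
  have := Kb1; lra.
have [Mf HMf] := fin_all_exists per_i.
exists (\sum_i `|Mf i|) => u1 u2 w hc i.
have hM : Mf i <= \sum_i `|Mf i|.
  apply: le_trans (ler_norm (Mf i)) _.
  by rewrite (bigD1 i) //= lerDl sumr_ge0 // => j _; exact: normr_ge0.
have [h1 [h2 h3]] := HMf i u1 u2 w hc.
by split; [apply: le_trans h1 hM| split; [apply: le_trans h2 hM| apply: le_trans h3 hM]].
Qed.

Theorem theorem6p1 (R : realType) (Omega : set (R * R)%type)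
  (nbar n m : nat) (p : 'I_nbar -> (R * R)%type) (chi : 'I_n -> 'I_nbar)
  (chm chp : 'I_m -> 'I_nbar) (f : 'cV[R]_n) :
  (* Omega is a bounded domain of R^2 *)
  open Omega -> connected Omega -> Omega !=set0 -> bounded_set Omega ->
  (* X = {p a | a < nbar} is a finite subset of closure Omega, enumerated injectively *)
  injective p -> (forall a, closure Omega (p a)) ->
  (* chi enumerates X \ bdry Omega *)
  injective chi ->
  (forall a, ~ bdry Omega (p a) <-> exists i, chi i = a) ->
  (* k |-> {chi_-(k), chi_+(k)} enumerates the unordered pairs of distinct points *)
  (forall k, chm k != chp k) ->
  (forall a b, a != b -> exists! k,
      (chm k = a /\ chp k = b) \/ (chm k = b /\ chp k = a)) ->
  (* X \ bdry Omega is contained in int(conv(X /\ bdry Omega)) *)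
  (forall i, interior (conv_hull [set x | exists a, x = p a /\ bdry Omega x])
                      (p (chi i))) ->
  (exists Z : R,
     (exists s r q, P_opt p chi chm chp f s r q /\ P_obj p chm chp s r = Z) /\
     (exists u1 u2 w t1 t2 t3, D_opt p chi chm chp f u1 u2 w t1 t2 t3 /\
                               D_obj f w = Z)) /\
  (forall (s q : 'cV[R]_m) (u1 u2 w : 'cV[R]_n), nonneg s ->
     ((exists r, P_opt p chi chm chp f s r q) /\
      (exists t1 t2 t3, D_opt p chi chm chp f u1 u2 w t1 t2 t3))
     <->
     [/\ forall k, ((Dmat R chi chm chp *m w) k 0) ^+ 2 / (4 * lvec p chm chp k 0)
                   + (Bmat1 p chi chm chp *m u1 + Bmat2 p chi chm chp *m u2) k 0
                   <= lvec p chm chp k 0,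
         (Bmat1 p chi chm chp)^T *m s = 0 /\ (Bmat2 p chi chm chp)^T *m s = 0 /\
           (Dmat R chi chm chp)^T *m q = f,
         forall k, s k 0 != 0 ->
           ((Dmat R chi chm chp *m w) k 0) ^+ 2 / (4 * lvec p chm chp k 0)
           + (Bmat1 p chi chm chp *m u1 + Bmat2 p chi chm chp *m u2) k 0
           = lvec p chm chp k 0
       & forall k, q k 0 = s k 0 * (Dmat R chi chm chp *m w) k 0
                           / (2 * lvec p chm chp k 0)]).

Proof.
move=> _ _ _ _ Hp _ Hchi Hbd Hne Hpair Hint.
have lpos := lvec_pos p chm chp Hp Hne.
have bnd := bound_all _ _ _ _ _ Hchi Hbd lpos Hpair Hint.
exact: (abs_main _ _ _ _ f lpos bnd).
Qed.
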